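(* Let $G$ and $H$ be finite simple graphs, let $n_2$ be the order of $H$, and let $u\in V(G)$, $v\in V(H)$. Then \[\mathrm{dp}_{G[H]}((u,v))=\big(\mathrm{dp}_G(u)\big)^{\curlywedge\times n_2}\,\mathrm{dp}(H)+x^{(\deg_G u)\,n_2}\,\mathrm{dp}_H(v).\]
   Context: For a vertex $w$ of a simple graph $\Gamma$, the degree polynomial $\mathrm{dp}_\Gamma(w)\in\mathbb{Z}[x]$ is the polynomial in which the coefficient of $x^{i}$ is the number of neighbors of $w$ in $\Gamma$ having degree $i$ in $\Gamma$ ($\mathrm{dp}_\Gamma(w)=0$ if $w$ is isolated). The degree polynomial of the graph $\Gamma$ is $\mathrm{dp}(\Gamma)=\sum_{i\ge0} t_i x^i$, where $t_i$ is the number of vertices of $\Gamma$ of degree $i$. For a polynomial $f=\sum_i a_i x^i$ with nonnegative integer coefficients and $n\in\mathbb{N}$, $f^{\curlywedge\times n}=\sum_i a_i x^{in}$ (and $0^{\curlywedge\times n}=0$). The lexicographic product $G[H]$ is the simple graph on $V(G)\times V(H)$ in which $(u_1,v_1)\sim(u_2,v_2)$ if and only if either $u_1\sim u_2$ in $G$, or $u_1=u_2$ and $v_1\sim v_2$ in $H$. *)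

(* Defs.v *)
From mathcomp Require Import all_boot all_order all_algebra.
Set Implicit Arguments. Unset Strict Implicit. Unset Printing Implicit Defensive.
Import GRing.Theory.
Local Open Scope ring_scope.

Definition simple_graph (T : finType) (e : rel T) : Prop :=
  symmetric e /\ irreflexive e.

Definition deg (T : finType) (e : rel T) (w : T) : nat := #|[set y | e w y]|.

Definition dpv (T : finType) (e : rel T) (w : T) : {poly int} :=
  \sum_(y : T | e w y) 'X^(deg e y).

Definition dpg (T : finType) (e : rel T) : {poly int} :=
  \sum_(y : T) 'X^(deg e y).

Definition stretch (f : {poly int}) (n : nat) : {poly int} :=
  \sum_(i < size f) f`_i *: 'X^(i * n).

Definition lexprod (T1 T2 : finType) (e1 : rel T1) (e2 : rel T2) : rel (T1 * T2) :=
  fun p q => e1 p.1 q.1 || ((p.1 == q.1) && e2 p.2 q.2).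

(* Main.v *)
Require Import Defs.
From mathcomp Require Import all_boot all_order all_algebra.
Local Open Scope ring_scope.
Import GRing.Theory.

Lemma stretch_comp (f : {poly int}) n : stretch f n = f \Po 'X^n.
Proof.
rewrite comp_polyE /stretch; apply: eq_bigr => i _.
by rewrite -exprM mulnC.
Qed.

Lemma stretch_sum (T : finType) (P : pred T) (F : T -> nat) n :
  stretch (\sum_(y | P y) 'X^(F y)) n = \sum_(y | P y) 'X^(F y * n).
Proof.
rewrite stretch_comp.
rewrite (big_morph (fun p => p \Po 'X^n) (fun p q => comp_polyD p q _) (comp_poly0 _)).
by apply: eq_bigr => y _; rewrite comp_Xn_poly -exprM mulnC.
Qed.

Lemma deg_lex (T1 T2 : finType) (e1 : rel T1) (e2 : rel T2)
  (hG : simple_graph e1) a b :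
  deg (lexprod e1 e2) (a, b) = (deg e1 a * #|T2| + deg e2 b)%N.
Proof.
rewrite /deg.
have -> : [set y | lexprod e1 e2 (a, b) y] =
   setX [set c | e1 a c] [set: T2] :|: setX [set a] [set d | e2 b d].
  apply/setP => -[c d]; rewrite !inE /lexprod /= andbT eq_sym.
  by [].
rewrite -(cardsT T2).
rewrite -cardsX -[#|[set d | e2 b d]|]mul1n -(cards1 a) -cardsX.
rewrite -cardsUI.
suff -> : setX [set c | e1 a c] [set: T2] :&: setX [set a] [set d | e2 b d] = set0
  by rewrite cards0 addn0.
apply/setP => -[c d]; rewrite !inE /=.
case: eqP => [->|]; last by rewrite !andbF.
by rewrite hG.2.
Qed.

Lemma deg_lex' (T1 T2 : finType) (e1 : rel T1) (e2 : rel T2)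
  (hG : simple_graph e1) (p : T1 * T2) :
  deg (lexprod e1 e2) p = (deg e1 p.1 * #|T2| + deg e2 p.2)%N.
Proof. by case: p => a b; apply: deg_lex. Qed.

Theorem theorem4p18 (T1 T2 : finType) (e1 : rel T1) (e2 : rel T2)
  (hG : simple_graph e1) (hH : simple_graph e2) (u : T1) (v : T2) :
  dpv (lexprod e1 e2) (u, v) =
  stretch (dpv e1 u) #|T2| * dpg e2 + 'X^(deg e1 u * #|T2|) * dpv e2 v.
Proof.
rewrite /dpv stretch_sum /dpg big_distrl big_distrr /=.
under eq_bigr => p _ do rewrite (@deg_lex' _ _ e1 e2 hG) exprD.
rewrite big_mkcond /=.
rewrite -(pair_big xpredT xpredT (fun c d =>
   if lexprod e1 e2 (u, v) (c, d) then 'X^(deg e1 c * #|T2|) * 'X^(deg e2 d) else 0)) /=.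
rewrite (eq_bigr (fun c => (if e1 u c then \sum_d 'X^(deg e1 c * #|T2|) * 'X^(deg e2 d) else 0)
  + (if c == u then \sum_(d | e2 v d) 'X^(deg e1 c * #|T2|) * 'X^(deg e2 d) else 0))).
  rewrite big_split /= -big_mkcond /= -big_mkcond /= big_pred1_eq.
  congr (_ + _); apply: eq_bigr => c _; by rewrite big_distrr.
move=> c _; rewrite /lexprod /=.
case h: (e1 u c) => /=.
  case: eqP => [E|_]; last by rewrite addr0.
  by subst c; move: h; rewrite hG.2.
rewrite add0r eq_sym; case: eqP => _ /=; last by rewrite big1.
by rewrite [RHS]big_mkcond.
Qed.
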